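(* For all $2$-admissible integers $n > 1$, any partial $2$-star design of order $n$ with $n-3$ stars is completable.
   Context: A $2$-star is a copy of $K_{1,2}$ (a path with two edges). A partial $2$-star design of order $n$ is a pair $(V,\mathcal{A})$ where $V$ is a set of $n$ vertices and $\mathcal{A}$ is a set of edge-disjoint $2$-stars that are subgraphs of the complete graph $K_V$; it is completable if there is a set $\mathcal{B}\supseteq\mathcal{A}$ of edge-disjoint $2$-stars in $K_V$ whose edges cover all edges of $K_V$. A positive integer $n$ is $2$-admissible if $\binom{n}{2}$ is even. *)

(* Defs.v *)
From mathcomp Require Import all_boot.
Set Implicit Arguments. Unset Strict Implicit. Unset Printing Implicit Defensive.

Definition is_edge (n : nat) (e : {set 'I_n}) : bool := #|e| == 2.

(* A 2-star (copy of K_{1,2}) is given by a triple (c, a, b): centre c and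
   leaves a, b, pairwise distinct.  As a subgraph of K_V it is identified with
   its edge set {{c,a},{c,b}}. *)
Definition star (n : nat) := ('I_n * 'I_n * 'I_n)%type.

Definition valid_star (n : nat) (s : star n) : bool :=
  let: (c, a, b) := s in [&& c != a, c != b & a != b].

Definition star_edges (n : nat) (s : star n) : {set {set 'I_n}} :=
  let: (c, a, b) := s in [set [set c; a]; [set c; b]].

(* Edge-disjointness forces distinct indices to give distinct stars, so this
   faithfully represents a set of k edge-disjoint 2-stars in K_V. *)
Definition edge_disjoint_stars (n k : nat) (A : 'I_k -> star n) : Prop :=
  (forall i, valid_star (A i)) /\
  (forall i j, i != j -> star_edges (A i) :&: star_edges (A j) = set0).

Definition partial_2star_design (n k : nat) (A : 'I_k -> star n) : Prop :=
  edge_disjoint_stars A.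

Definition completable (n k : nat) (A : 'I_k -> star n) : Prop :=
  exists (m : nat) (B : 'I_m -> star n),
    edge_disjoint_stars B /\
    (forall i : 'I_k, exists j : 'I_m, star_edges (B j) = star_edges (A i)) /\
    (forall e : {set 'I_n}, is_edge e -> exists j : 'I_m, e \in star_edges (B j)).

Definition two_admissible (n : nat) : bool := (0 < n) && ~~ odd 'C(n, 2).

(* Main.v *)
Require Import Defs.
From mathcomp Require Import all_boot.
From mathcomp Require Import zify.
Set Implicit Arguments. Unset Strict Implicit. Unset Printing Implicit Defensive.

Definition indeg n (H : {set {set 'I_n}}) (h : {set 'I_n} -> 'I_n) (w : 'I_n) : nat :=
  \sum_(e in H) (h e == w).
Definition adj n (H : {set {set 'I_n}}) : rel 'I_n := fun a b => [set a; b] \in H.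
Definition validh n (H : {set {set 'I_n}}) (h : {set 'I_n} -> 'I_n) :=
  forall e, e \in H -> h e \in e.

Lemma sumD1 (T : finType) (F : {set T}) (f : T -> nat) e :
  e \in F -> \sum_(x in F) f x = f e + \sum_(x in F :\ e) f x.
Proof.
move=> eF; rewrite (bigD1 e) //=; congr (_ + _); apply: eq_bigl => x.
by rewrite in_setD1 andbC.
Qed.

Lemma flip_ok n (H : {set {set 'I_n}}) h x y :
  validh H h -> [set x; y] \in H -> x != y ->
  exists h', validh H h' /\
    forall w, odd (indeg H h' w) = odd (indeg H h w) (+) (w == x) (+) (w == y).
Proof.
move=> hv fH xy; set f := [set x; y] in fH *.
exists (fun e => if e == f then (if h e == x then y else x) else h e).
split.
  move=> e eH; case: eqP => [->|_]; last exact: hv.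
  by case: (h f == x); rewrite !inE eqxx ?orbT.
move=> w; rewrite /indeg (sumD1 _ fH) [in RHS](sumD1 _ fH) !oddD eqxx.
rewrite (_ : \sum_(e in H :\ f) _ = \sum_(e in H :\ f) (h e == w)); last first.
  by apply: eq_bigr => e; rewrite in_setD1 => /andP[/negPf -> _].
rewrite !oddb; move: (odd _) => b.
have: h f \in f by apply: hv.
have yx : (y == x) = false by rewrite eq_sym (negPf xy).
rewrite !inE => /orP[] /eqP ->; rewrite ?eqxx ?yx;
 case: (w =P x) => [<-|/eqP nx]; case: (w =P y) => [<-|/eqP ny];
 rewrite ?eqxx ?yx ?(negPf xy) ?(negPf nx) ?(negPf ny) ?(eq_sym x w) ?(eq_sym y w) ?(negPf nx) ?(negPf ny); destruct b => //.
all: try by move: ny; rewrite eqxx.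
all: try by move: nx; rewrite eqxx.
Qed.
Lemma path_ok n (H : {set {set 'I_n}}) h x p :
  (forall e, e \in H -> #|e| == 2) ->
  validh H h -> path (adj H) x p ->
  exists h', validh H h' /\
    forall w, odd (indeg H h' w) = odd (indeg H h w) (+) (w == x) (+) (w == last x p).
Proof.
move=> He; elim: p x h => [|y p IH] x h hv /=.
  by move=> _; exists h; split => // w; rewrite -addbA addbb addbF.
case/andP=> xy py.
have nxy : x != y.
  by move: (He _ xy); rewrite cards2; case: (x != y).
have [h1 [h1v h1o]] := flip_ok hv xy nxy.
have [h' [h'v h'o]] := IH y h1 h1v py.
exists h'; split => // w; rewrite h'o h1o.
by case: (w == x); case: (w == y); case: (w == last y p); case: (odd _).
Qed.

Lemma sum_indeg n (H : {set {set 'I_n}}) h : \sum_w indeg H h w = #|H|.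
Proof.
rewrite /indeg exchange_big /= -sum1_card; apply: eq_bigr => e _.
rewrite (bigD1 (h e)) //= eqxx big1 // => w; rewrite eq_sym => /negPf ->.
done.
Qed.

Lemma fix_all n (H : {set {set 'I_n}}) h :
  (forall e, e \in H -> #|e| == 2) -> validh H h -> ~~ odd #|H| ->
  (forall u v, (exists e, e \in H /\ u \in e) -> (exists e, e \in H /\ v \in e) ->
      connect (adj H) u v) ->
  exists h', validh H h' /\ forall w, ~~ odd (indeg H h' w).
Proof.
move=> He hv Hev Hc.
have [k Hk] : exists k, #|[set w | odd (indeg H h w)]| <= k by exists #|[set w | odd (indeg H h w)]|.
elim: k h hv Hk => [|k IH] h hv Hk.
  exists h; split => // w; apply/negP => ow.
  have : w \in [set w | odd (indeg H h w)] by rewrite inE.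
  by move: Hk; rewrite leqn0 => /eqP/cards0_eq ->; rewrite inE.
case: (boolP [exists w, odd (indeg H h w)]); last first.
  by move=> /existsPn ne; exists h; split.
case/existsP=> w ow.
have [w' [ww' ow']] : exists w', w' != w /\ odd (indeg H h w').
  case: (boolP [exists w', (w' != w) && odd (indeg H h w')]).
    by case/existsP=> w' /andP[? ?]; exists w'.
  move/existsPn=> nw; move: Hev; rewrite -(sum_indeg H h) (bigD1 w) //= oddD ow /=.
  rewrite negbK => D; exfalso; move: D; apply/negP; rewrite -dvdn2; apply: dvdn_sum => z zw.
  by rewrite dvdn2; move: (nw z); rewrite zw.
have inc : forall z, odd (indeg H h z) -> exists e, e \in H /\ z \in e.
  move=> z oz; case: (boolP [exists e in H, h e == z]).
    by case/existsP=> e /andP[eH /eqP <-]; exists e; split => //; apply: hv.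
  move/existsPn=> ne; move: oz; rewrite /indeg big1 // => e eH.
  by move: (ne e); rewrite eH /= => /negPf ->.
have /connectP [p pp lp] := Hc _ _ (inc _ ow) (inc _ ow').
have [h' [h'v h'o]] := path_ok He hv pp.
apply: (IH h' h'v).
rewrite -ltnS; apply: (leq_trans _ Hk).
have wo : w \in [set z | odd (indeg H h z)] by rewrite inE.
rewrite [X in _ < X](cardsD1 w) wo add1n ltnS.
apply: subset_leq_card; apply/subsetP => z; rewrite !inE h'o -lp.
case: (z =P w) => [->|/eqP nzw]; first by rewrite ow eq_sym (negPf ww').
case: (z =P w') => [->|/eqP nzw']; first by rewrite ow'.
by rewrite !addbF.
Qed.

Definition disj n (t t' : star n) : bool := star_edges t :&: star_edges t' == set0.

Lemma other_end n (e : {set 'I_n}) v : #|e| == 2 -> v \in e ->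
  exists a, a != v /\ e = [set v; a].
Proof.
case/cards2P=> x [y [xy ->]]; rewrite !inE => /orP[] /eqP ->.
  by exists y; rewrite eq_sym.
by exists x; split => //; apply: setUC.
Qed.

Lemma decomp n (F : {set {set 'I_n}}) h :
  (forall e, e \in F -> #|e| == 2) -> validh F h -> (forall w, ~~ odd (indeg F h w)) ->
  exists s : seq (star n), all (@valid_star n) s /\ pairwise (@disj n) s /\
    forall e, (e \in F) = has (fun t => e \in star_edges t) s.
Proof.
have [k Hk] : exists k, #|F| <= k by exists #|F|.
elim: k F Hk => [|k IH] F Hk He hv hev.
  exists [::]; split => //; split => // e.
  by move: Hk; rewrite leqn0 => /eqP/cards0_eq ->; rewrite inE.
case: (set_0Vmem F) => [F0|[e eF]].
  by exists [::]; split => //; split => // e0; rewrite F0 inE.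
set v := h e.
have [e' [e'F [e'e he']]] : exists e', [/\ e' \in F, e' != e & h e' = v].
  case: (boolP [exists e' in F :\ e, h e' == v]).
    by case/existsP=> e' /andP[]; rewrite in_setD1 => /andP[? ?] /eqP ?; exists e'.
  move/existsPn=> ne; move: (hev v); rewrite /indeg (sumD1 _ eF) big1 ?eqxx //.
  by move=> x xF; move: (ne x); rewrite xF /= => /negPf ->.
have [a [av ea]] := other_end (He _ eF) (hv _ eF).
have [b [bv eb]] : exists b, b != v /\ e' = [set v; b].
  by rewrite -he'; apply: other_end (He _ e'F) (hv _ e'F).
have ab : a != b.
  by apply/eqP=> ab; move: e'e; rewrite ea eb ab eqxx.
set F' := F :\ e :\ e'.
have e'F1 : e' \in F :\ e by rewrite in_setD1 e'e.
have sumF : forall f : {set 'I_n} -> nat, \sum_(x in F) f x = f e + f e' + \sum_(x in F') f x.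
  by move=> f; rewrite (sumD1 _ eF) (sumD1 _ e'F1) addnA.
have [s [sv [sp sc]]] : exists s : seq (star n), all (@valid_star n) s /\ pairwise (@disj n) s /\
    forall e, (e \in F') = has (fun t => e \in star_edges t) s.
  apply: IH.
  - move: Hk; rewrite (cardsD1 e F) eF (cardsD1 e' (F :\ e)) e'F1 !add1n ltnS.
    by move/ltnW.
  - by move=> x; rewrite !in_setD1 => /and3P[_ _]; apply: He.
  - by move=> x; rewrite !in_setD1 => /and3P[_ _]; apply: hv.
  - move=> w; move: (hev w); rewrite /indeg sumF he' !oddD.
    by case: (h e == w).
exists ((v, a, b) :: s); split.
  by rewrite /= sv andbT eq_sym av eq_sym bv ab.
split.
  rewrite pairwise_cons sp andbT; apply/allP => t' t's.
  rewrite /disj; apply/eqP/setP => x; rewrite !inE; apply/negP => /andP[xt xt'].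
  have : x \in F' by rewrite sc; apply/hasP; exists t'.
  by rewrite !in_setD1; move: xt; rewrite -ea -eb => /orP[] /eqP ->; rewrite eqxx ?andbF.
move=> e0; rewrite /= -sc !in_setD1 !inE -ea -eb.
case: (e0 =P e) => [->|_]; first by rewrite eF.
by case: (e0 =P e') => [->|_]; rewrite ?e'F.
Qed.

Definition Hof n (M : {set {set 'I_n}}) := [set e : {set 'I_n} | is_edge e && (e \notin M)].

Lemma Hof_edge n (M : {set {set 'I_n}}) e : e \in Hof M -> #|e| == 2.
Proof. by rewrite inE => /andP[]. Qed.

Lemma conn n (M : {set {set 'I_n}}) : #|M| + 4 < 2 * n ->
  forall u v, (exists e, e \in Hof M /\ u \in e) -> (exists e, e \in Hof M /\ v \in e) ->
  connect (adj (Hof M)) u v.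
Proof.
move=> HM u v [e [eH ue]] [e' [e'H ve']].
have [u' [u'u eu]] := other_end (Hof_edge eH) ue.
have [v' [v'v ev]] := other_end (Hof_edge e'H) ve'.
case: (boolP (connect (adj (Hof M)) u v)) => // nc.
have [C HC] : exists C : {set 'I_n}, forall w, (w \in C) = connect (adj (Hof M)) u w.
  by exists [set w | connect (adj (Hof M)) u w] => w; rewrite inE.
have uC : u \in C by rewrite HC connect0.
have u'C : u' \in C by rewrite HC; apply: connect1; rewrite /adj -eu.
have vC : v \notin C by rewrite HC.
have v'C : v' \notin C.
  rewrite HC; apply/negP => cv; move/negP: nc; apply; apply: (connect_trans cv); apply: connect1.
  by rewrite /adj setUC -ev.
have cross : forall c d, c \in C -> d \notin C -> [set c; d] \in M.
  move=> c d cC dC; have cd : c != d by apply/eqP => E; move: dC; rewrite -E cC.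
  case: (boolP ([set c; d] \in M)) => // nM; exfalso; move/negP: dC; apply.
  rewrite HC; move: cC; rewrite HC => cC; apply: (connect_trans cC); apply: connect1.
  by rewrite /adj inE /is_edge cards2 cd nM.
pose f := fun p : 'I_n * 'I_n => [set p.1; p.2].
have inj : {in setX C (~: C) &, injective f}.
  move=> [c d] [c' d']; rewrite !inE /= => /andP[cC dC] /andP[c'C d'C]; rewrite /f /= => E.
  have : c \in [set c'; d'] by rewrite -E !inE eqxx.
  rewrite !inE => /orP[/eqP cc|/eqP cd']; last by move: d'C; rewrite -cd' cC.
  have : d \in [set c'; d'] by rewrite -E !inE eqxx orbT.
  rewrite !inE => /orP[/eqP dc|/eqP dd']; first by move: dC; rewrite dc c'C.
  by rewrite cc dd'.
have sub : f @: setX C (~: C) \subset M.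
  apply/subsetP => x /imsetP [[c d]]; rewrite !inE /= => /andP[cC dC] ->.
  by apply: cross.
have := subset_leq_card sub; rewrite (card_in_imset inj) cardsX.
have := cardsC C; rewrite card_ord.
have : 2 <= #|C|.
  have <- : #|[set u; u']| = 2 by rewrite cards2 eq_sym u'u.
  by apply: subset_leq_card; apply/subsetP => x; rewrite !inE => /orP[] /eqP ->.
have : 2 <= #|~: C|.
  have <- : #|[set v; v']| = 2 by rewrite cards2 eq_sym v'v.
  by apply: subset_leq_card; apply/subsetP => x; rewrite !inE => /orP[] /eqP ->.
move: HM; move: #|C| #|~: C| #|M| => a b m.
nia.
Qed.

Lemma card_bigcup_ord (T : finType) k (F : 'I_k -> {set T}) :
  (forall i j, i != j -> F i :&: F j = set0) ->
  #|\bigcup_(i < k) F i| = \sum_(i < k) #|F i|.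
Proof.
elim: k F => [|k IH] F Hd; first by rewrite !big_ord0 cards0.
rewrite big_ord_recr /= big_ord_recr /= cardsU IH; last first.
  move=> i j ij; apply: Hd; move: ij; apply: contra => /eqP E.
  by apply/eqP/val_inj; move: E => /(congr1 val).
suff -> : (\bigcup_(i < k) F (widen_ord (leqnSn k) i)) :&: F ord_max = set0.
  by rewrite cards0 subn0.
apply/setP => x; rewrite !inE; apply/negP => /andP[/bigcupP[i _ xi] xm].
have ne : widen_ord (leqnSn k) i != ord_max by rewrite -val_eqE /= neq_ltn ltn_ord.
by move: (Hd _ _ ne) => /setP/(_ x); rewrite !inE xi xm.
Qed.

Lemma star_card n (t : star n) : valid_star t -> #|star_edges t| = 2.
Proof.
case: t => [[c a] b] /and3P[ca cb ab] /=; rewrite cards2.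
have ne : [set c; a] != [set c; b].
  apply/negP => /eqP E; have : b \in [set c; a] by rewrite E !inE eqxx orbT.
  by rewrite !inE eq_sym (negPf cb) eq_sym (negPf ab).
by rewrite ne.
Qed.

Lemma star_edge n (t : star n) e : valid_star t -> e \in star_edges t -> is_edge e.
Proof.
case: t => [[c a] b] /and3P[ca cb ab] /=; rewrite !inE => /orP[] /eqP ->;
by rewrite /is_edge cards2 ?ca ?cb.
Qed.

Theorem lemma6 (n : nat) (A : 'I_(n - 3) -> star n) :
  two_admissible n -> 1 < n -> partial_2star_design A -> completable A.
Proof.
move=> adm n1 [Av Ad].
have n4 : 3 < n.
  case: (ltnP 3 n) => // n3; exfalso.
  have : n = 2 \/ n = 3 by lia.
  by case=> En; move: adm; rewrite En.
pose M := \bigcup_(i < n - 3) star_edges (A i).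
have cardM : #|M| = (n - 3) * 2.
  rewrite /M card_bigcup_ord; last by move=> i j ij; apply: Ad.
  by rewrite (eq_bigr (fun _ => 2)) ?sum_nat_const ?card_ord // => i _; apply: star_card.
have Medge : forall e, e \in M -> is_edge e.
  by move=> e /bigcupP[i _ ei]; apply: star_edge ei.
pose H := Hof M.
have HE : H = [set e : {set 'I_n} | #|e| == 2] :\: M.
  by apply/setP => e; rewrite !inE /is_edge andbC.
have Hev : ~~ odd #|H|.
  have MS : M \subset [set e : {set 'I_n} | #|e| == 2].
    by apply/subsetP => e /Medge; rewrite inE.
  rewrite HE cardsD (setIidPr MS) card_draws card_ord oddB; last first.
    by have := subset_leq_card MS; rewrite card_draws card_ord.
  by rewrite cardM oddM /= andbF addbF; move: adm => /andP[].
have x0 : 'I_n := Ordinal (ltnW n1).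
pose h0 := fun e : {set 'I_n} => odflt x0 [pick x in e].
have h0v : validh H h0.
  move=> e /Hof_edge; rewrite /h0; case: (pickP (fun x => x \in e)) => [x xe|none] //=.
  by rewrite (eq_card0 none).
have HMb : #|M| + 4 < 2 * n by rewrite cardM; lia.
have [h [hv hev]] := fix_all (@Hof_edge n M) h0v Hev (conn HMb).
have [s [sv [sp sc]]] := decomp (@Hof_edge n M) hv hev.
pose d : star n := (x0, x0, x0).
pose B := fun i : 'I_(n - 3 + size s) =>
  match split i with inl j => A j | inr j => nth d s j end.
have sH : forall t e, t \in s -> e \in star_edges t -> e \in Hof M.
  by move=> t e ts et; rewrite sc; apply/hasP; exists t.
have mix : forall (i1 : 'I_(n - 3)) (j2 : 'I_(size s)),
    star_edges (A i1) :&: star_edges (nth d s j2) = set0.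
  move=> i1 j2; apply/setP => e; rewrite !inE; apply/negP => /andP[e1 e2].
  have := sH _ _ (mem_nth d (ltn_ord j2)) e2.
  by rewrite inE => /andP[_ /negP]; apply; apply/bigcupP; exists i1.
move: sp => /(pairwiseP d) PP.
exists (n - 3 + size s), B; split; [split|split].
- move=> i; rewrite /B; case: (split i) => j; first exact: Av.
  exact: (allP sv) _ (mem_nth d (ltn_ord j)).
- move=> i j ij; rewrite /B.
  case Ei: (split i) => [i1|i2]; case Ej: (split j) => [j1|j2].
  + apply: Ad; apply: contra ij => /eqP E.
    by rewrite -(splitK i) -(splitK j) Ei Ej E.
  + exact: mix.
  + by rewrite setIC; apply: mix.
  + have [lt|gt|eq] := ltngtP i2 j2.
    * by apply/eqP; apply: PP lt; rewrite inE ltn_ord.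
    * by rewrite setIC; apply/eqP; apply: PP gt; rewrite inE ltn_ord.
    * have E : i2 = j2 by apply: val_inj.
      by move: ij; rewrite -(splitK i) -(splitK j) Ei Ej E eqxx.
- by move=> i; exists (unsplit (inl i)); rewrite /B unsplitK.
- move=> e ee; case: (boolP (e \in M)) => eM.
    by case/bigcupP: eM => i _ ei; exists (unsplit (inl i)); rewrite /B unsplitK.
  have : e \in Hof M by rewrite inE ee eM.
  rewrite sc => /hasP[t ts et]; case/(nthP d): ts => j js tj.
  by exists (unsplit (inr (Ordinal js))); rewrite /B unsplitK /= tj.
Qed.
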